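(* The family $\mathcal{FG}$ of functionally generated portfolio maps, with the topology of uniform convergence (supremum metric), is not totally bounded; in fact it is not separable.
   Context: $n\ge2$; $\Delta_n=\{p\in(0,1)^n:\sum p_i=1\}$, $\overline{\Delta}_n$ its closure. A map $\pi:\Delta_n\to\overline{\Delta}_n$ is functionally generated if there is a concave $\Phi:\Delta_n\to(0,\infty)$ with $\sum_i\pi_i(p)\frac{q_i}{p_i}\ge\frac{\Phi(q)}{\Phi(p)}$ for all $p,q\in\Delta_n$. The metric is $\|\pi-\eta\|_\infty=\sup_{p\in\Delta_n}|\pi(p)-\eta(p)|$. *)

(* Defs.v *)
From HB Require Import structures.
From mathcomp Require Import all_boot all_order all_algebra.
From mathcomp Require Import classical_sets reals.
Set Implicit Arguments. Unset Strict Implicit. Unset Printing Implicit Defensive.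
Import Order.TTheory GRing.Theory Num.Theory.
Local Open Scope classical_set_scope.
Local Open Scope ring_scope.

Definition open_simplex (R : realType) (n : nat) (p : 'I_n -> R) : Prop :=
  (forall i, 0 < p i /\ p i < 1) /\ \sum_(i < n) p i = 1.

Definition closed_simplex (R : realType) (n : nat) (p : 'I_n -> R) : Prop :=
  (forall i, 0 <= p i) /\ \sum_(i < n) p i = 1.

Definition eucl_dist (R : realType) (n : nat) (x y : 'I_n -> R) : R :=
  Num.sqrt (\sum_(i < n) (x i - y i) ^+ 2).

(* A portfolio map pi : Delta_n -> closure(Delta_n); only its values on
   Delta_n matter. *)
Definition portfolio_map (R : realType) (n : nat)
  (pi : ('I_n -> R) -> ('I_n -> R)) : Prop :=
  forall p, open_simplex p -> closed_simplex (pi p).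

Definition pos_concave_on_simplex (R : realType) (n : nat)
  (Phi : ('I_n -> R) -> R) : Prop :=
  (forall p, open_simplex p -> 0 < Phi p) /\
  (forall p q (t : R), open_simplex p -> open_simplex q -> 0 <= t -> t <= 1 ->
     t * Phi p + (1 - t) * Phi q <= Phi (fun i => t * p i + (1 - t) * q i)).

Definition functionally_generated (R : realType) (n : nat)
  (pi : ('I_n -> R) -> ('I_n -> R)) : Prop :=
  portfolio_map pi /\
  exists Phi : ('I_n -> R) -> R, pos_concave_on_simplex Phi /\
    forall p q, open_simplex p -> open_simplex q ->
      Phi q / Phi p <= \sum_(i < n) pi p i * (q i / p i).

Definition sup_dist (R : realType) (n : nat)
  (pi eta : ('I_n -> R) -> ('I_n -> R)) : R :=
  sup [set eucl_dist (pi p) (eta p) | p in [set p | open_simplex p]].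

Definition FG_totally_bounded (R : realType) (n : nat) : Prop :=
  forall eps : R, 0 < eps ->
    exists (k : nat) (c : 'I_k -> (('I_n -> R) -> ('I_n -> R))),
      (forall j, functionally_generated (c j)) /\
      forall pi, functionally_generated pi ->
        exists j, sup_dist pi (c j) < eps.

(* Separability of FG in the sup metric: a countable (nat-indexed) subset of
   FG that is dense in FG. (FG is nonempty, so indexing by nat is general.) *)
Definition FG_separable (R : realType) (n : nat) : Prop :=
  exists f : nat -> (('I_n -> R) -> ('I_n -> R)),
    (forall k, functionally_generated (f k)) /\
    forall pi, functionally_generated pi ->
      forall eps : R, 0 < eps -> exists k, sup_dist pi (f k) < eps.

(* Main.v *)
Require Import Defs.
From mathcomp Require Import all_boot all_order all_algebra.
From mathcomp Require Import classical_sets boolp reals.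
From mathcomp Require Import ring lra.
Set Implicit Arguments. Unset Strict Implicit. Unset Printing Implicit Defensive.
Import Order.TTheory GRing.Theory Num.Theory.
Local Open Scope ring_scope.

Section Constr.
Variables (R : realType) (n : nat) (i0 : 'I_n).

Definition P (k : nat) : R := 2 ^+ k.
Definition cc (k : nat) (i : 'I_n) : R := if i == i0 then P k else (P k)^-1.
Definition lin (k : nat) (q : 'I_n -> R) : R := \sum_i cc k i * q i.

Lemma P_gt0 k : 0 < P k.
Proof. by rewrite /P exprn_gt0. Qed.

Lemma sum_off (q : 'I_n -> R) : \sum_(i < n) q i = 1 ->
  \sum_(i < n | i != i0) q i = 1 - q i0.
Proof. by rewrite (bigD1 i0) //= => <-; rewrite addrC addrK. Qed.

Lemma lin_simplex k q : open_simplex q ->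
  lin k q = P k * q i0 + (P k)^-1 * (1 - q i0).
Proof.
move=> [_ hs]; rewrite /lin (bigD1 i0) //= /cc eqxx; congr (_ + _).
rewrite -(sum_off hs) mulr_sumr; apply: eq_bigr => i /negbTE ->; by [].
Qed.

Lemma lin_gt0 k q : open_simplex q -> 0 < lin k q.
Proof.
move=> hq; rewrite lin_simplex //; have [h1 h2] := hq.1 i0.
have := P_gt0 k => hP.
apply: ltr_wpDr; last by rewrite mulr_gt0.
apply: mulr_ge0; first by rewrite invr_ge0 ltW.
by rewrite subr_ge0 ltW.
Qed.

Lemma lin_comb k (t : R) p q :
  lin k (fun i => t * p i + (1 - t) * q i) = t * lin k p + (1 - t) * lin k q.
Proof.
rewrite /lin !mulr_sumr -big_split; apply: eq_bigr => i _ /=; ring.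
Qed.

Definition Minp q k := forall j, lin k q <= lin j q.


Definition fa (a : R) (j : nat) : R := P j * a + (P j)^-1 * (1 - a).

Lemma fa_fin (a : R) N : exists k, (k <= N)%N /\ forall j, (j <= N)%N -> fa a k <= fa a j.
Proof.
elim: N => [|N [k [hk hmin]]].
  by exists 0%N; split => // j; rewrite leqn0 => /eqP ->.
have [le|lt] := lerP (fa a k) (fa a N.+1).
  exists k; split; first by rewrite (leq_trans hk).
  move=> j; rewrite leq_eqVlt => /orP[/eqP ->//|]; rewrite ltnS; exact: hmin.
exists N.+1; split => // j; rewrite leq_eqVlt => /orP[/eqP ->//|]; rewrite ltnS => hj.
exact: le_trans (ltW lt) (hmin j hj).
Qed.

Lemma fa_min (a : R) : 0 < a -> a < 1 -> exists k, forall j, fa a k <= fa a j.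
Proof.
move=> a0 a1.
have ha' : 0 <= a^-1 by rewrite invr_ge0 ltW.
have hK := @archi_boundP R (a^-1) ha'.
set K := Num.Def.archi_bound _ in hK.
have [k [hk hmin]] := fa_fin a K.
exists k => j; have [jK|Kj] := leqP j K; first exact: hmin.
apply: (le_trans (hmin 0%N isT)).
have -> : fa a 0 = 1 by rewrite /fa /P expr0 invr1; ring.
have hP : K%:R <= P j.
  rewrite /P -natrX ler_nat; apply: ltnW; apply: leq_trans (ltn_expl _ _); [exact: ltnW|by []].
rewrite /fa; have hPj := P_gt0 j.
have h2 : 0 <= (P j)^-1 * (1 - a).
  apply: mulr_ge0; first by rewrite invr_ge0 ltW.
  by rewrite subr_ge0 ltW.
suff : 1 <= P j * a by lra.
have : a^-1 * a = 1 by rewrite mulVf // gt_eqF.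
move=> e; rewrite -e ler_pM2r //; exact: le_trans (ltW hK) hP.
Qed.

Lemma min_exists q : open_simplex q -> exists k, Minp q k.
Proof.
move=> hq; have [h1 h2] := hq.1 i0.
have [k hk] := fa_min h1 h2; exists k => j.
by rewrite !lin_simplex //; exact: hk.
Qed.


Definition xm (m : nat) : R := (1 + 2 * P m ^+ 2)^-1.

Lemma xm_bounds m : 0 < xm m /\ xm m < 1.
Proof.
have hP := P_gt0 m; have h : 1 < 1 + 2 * P m ^+ 2.
  by rewrite ltrDl mulr_gt0 // exprn_gt0.
split; first by rewrite invr_gt0; lra.
by rewrite invf_lt1 //; lra.
Qed.

Lemma one_sub_xm m : 1 - xm m = 2 * P m ^+ 2 * xm m.
Proof.
have hP := P_gt0 m; have h : 0 < 1 + 2 * P m ^+ 2.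
  by rewrite ltr_wpDr // ?mulr_ge0 // exprn_ge0 // ltW.
rewrite /xm; field; lra.
Qed.

Lemma PS m : P m.+1 = 2 * P m.
Proof. by rewrite /P exprS. Qed.

Lemma fa_xm_m m : fa (xm m) m = 3 * P m * xm m.
Proof.
rewrite /fa one_sub_xm; have := P_gt0 m => hP; field; lra.
Qed.

Lemma fa_xm_mS m : fa (xm m) m.+1 = 3 * P m * xm m.
Proof.
rewrite /fa one_sub_xm PS; have := P_gt0 m => hP; field; lra.
Qed.

Lemma fa_xm_min m j : fa (xm m) m <= fa (xm m) j.
Proof.
have hM := P_gt0 m; have hA := P_gt0 j; have [x0 _] := xm_bounds m.
have e : fa (xm m) j - fa (xm m) m = xm m * (P j - P m) * (P j - 2 * P m) / P j.
  rewrite /fa one_sub_xm; field; lra.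
rewrite -subr_ge0 e; apply: divr_ge0; last exact: ltW.
rewrite -mulrA; apply: mulr_ge0; first exact: ltW.
have [jm|mj] := leqP j m.
  have : P j <= P m by rewrite /P ler_eXn2l // ltr1n.
  move=> h; nra.
have : P m.+1 <= P j by rewrite /P ler_eXn2l // ltr1n.
rewrite PS => h; nra.
Qed.


Lemma xm_inj m m' : xm m = xm m' -> m = m'.
Proof.
move=> e; have hM := P_gt0 m; have hM' := P_gt0 m'.
have h : 0 < 1 + 2 * P m ^+ 2 by rewrite ltr_wpDr // ?mulr_ge0 // exprn_ge0 // ltW.
have h' : 0 < 1 + 2 * P m' ^+ 2 by rewrite ltr_wpDr // ?mulr_ge0 // exprn_ge0 // ltW.
have e2 : P m ^+ 2 = P m' ^+ 2.
  move: e; rewrite /xm => /(congr1 (fun x : R => x^-1)); rewrite !invrK; lra.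
have h1 : P m <= P m' by nra.
have h2 : P m' <= P m by nra.
apply/eqP; rewrite eqn_leq; apply/andP; split.
  by move: h1; rewrite /P ler_eXn2l // ltr1n.
by move: h2; rewrite /P ler_eXn2l // ltr1n.
Qed.

Lemma lin_fa k q : open_simplex q -> lin k q = fa (q i0) k.
Proof. by move=> hq; rewrite lin_simplex. Qed.

Section Fam.
Variable s : nat -> bool.

Definition Good q k := Minp q k /\ forall m, q i0 = xm m -> k = (m + s m)%N.

Lemma good_exists q : open_simplex q -> exists k, Good q k.
Proof.
move=> hq; case: (pselect (exists m, q i0 = xm m)) => [[m hm]|hno].
  exists (m + s m)%N; split; last by move=> m' hm'; have := xm_inj (etrans (esym hm) hm') => <-.
  move=> j; rewrite !lin_fa // hm.
  case: (s m); rewrite ?addn1 ?addn0; last exact: fa_xm_min.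
  rewrite fa_xm_mS -fa_xm_m; exact: fa_xm_min.
have [k hk] := min_exists hq; exists k; split => // m hm.
by exfalso; apply: hno; exists m.
Qed.

Definition Ms q : nat :=
  match pselect (exists k, Good q k) with
  | left h => proj1_sig (cid h)
  | right _ => 0%N end.

Lemma Ms_good q : open_simplex q -> Good q (Ms q).
Proof.
move=> hq; rewrite /Ms; case: pselect => [h|h]; first exact: (proj2_sig (cid h)).
by exfalso; apply: h; exact: good_exists.
Qed.

Definition pis (p : 'I_n -> R) (i : 'I_n) : R := p i * cc (Ms p) i / lin (Ms p) p.

Lemma cc_gt0 k i : 0 < cc k i.
Proof. by rewrite /cc; case: (i == i0); rewrite ?invr_gt0 P_gt0. Qed.

Lemma pis_FG : functionally_generated pis.
Proof.
split.
  move=> p hp; have hl := lin_gt0 (Ms p) hp; split.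
    move=> i; rewrite /pis divr_ge0 ?ltW // mulr_gt0 //; [exact: (hp.1 i).1|exact: cc_gt0].
  rewrite /pis -mulr_suml.
  have -> : \sum_(i < n) p i * cc (Ms p) i = lin (Ms p) p.
    by apply: eq_bigr => i _; rewrite mulrC.
  by rewrite divff ?gt_eqF.
exists (fun q => lin (Ms q) q); split.
  split; first by move=> p hp; exact: lin_gt0.
  move=> p q t hp hq t0 t1; rewrite lin_comb.
  have hp' := (Ms_good hp).1 (Ms (fun i => t * p i + (1 - t) * q i)).
  have hq' := (Ms_good hq).1 (Ms (fun i => t * p i + (1 - t) * q i)).
  rewrite lerD // ler_wpM2l //; lra.
move=> p q hp hq; have hl := lin_gt0 (Ms p) hp.
have -> : \sum_(i < n) pis p i * (q i / p i) = lin (Ms p) q / lin (Ms p) p.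
  set L := lin (Ms p) p in hl *.
  rewrite /pis -/L {1}/lin mulr_suml; apply: eq_bigr => i _.
  have := (hp.1 i).1 => hpi; field; rewrite !gt_eqF //.
apply: ler_wpM2r; first by rewrite invr_ge0 ltW.
exact: (Ms_good hq).1.
Qed.

End Fam.

Hypothesis hn : (1 < n)%N.

Definition qm (m : nat) (i : 'I_n) : R :=
  if i == i0 then xm m else (1 - xm m) / (n.-1)%:R.

Lemma qm_open m : open_simplex (qm m).
Proof.
have [x0 x1] := xm_bounds m.
have hn1 : 1 <= (n.-1)%:R :> R by rewrite ler1n -ltnS prednK // ltnW.
split.
  move=> i; rewrite /qm; case: (i == i0) => //; split.
    by rewrite divr_gt0 //; lra.
  rewrite ltr_pdivrMr; last lra.
  nra.
rewrite (bigD1 i0) //= /qm eqxx.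
rewrite (eq_bigr (fun _ => (1 - xm m) / (n.-1)%:R)); last by move=> i /negbTE ->.
rewrite sumr_const.
have -> : #|(fun i : 'I_n => i != i0)| = n.-1 by have := cardC1 i0; rewrite card_ord => <-; apply: eq_card.
rewrite -mulr_natr; field; lra.
Qed.

Lemma pis_qm s m : pis s (qm m) i0 = if s m then 2/3 else 1/3.
Proof.
have hq := qm_open m.
rewrite /pis.
have -> : Ms s (qm m) = (m + s m)%N.
  by apply: (Ms_good s hq).2; rewrite /qm eqxx.
have [x0 _] := xm_bounds m; have hP := P_gt0 m.
rewrite lin_fa // /qm eqxx /cc eqxx.
case: (s m); rewrite ?addn1 ?addn0.
  rewrite fa_xm_mS PS; field; lra.
rewrite fa_xm_m; field; lra.
Qed.

End Constr.

Section Dist.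
Variables (R : realType) (n : nat).
Local Open Scope classical_set_scope.

Lemma cs_le1 (x : 'I_n -> R) i : closed_simplex x -> x i <= 1.
Proof.
move=> [h0 hs]; rewrite -hs (bigD1 i) //= lerDl sumr_ge0 // => j _; exact: h0.
Qed.

Lemma coord_le_eucl (x y : 'I_n -> R) i : `|x i - y i| <= eucl_dist x y.
Proof.
rewrite /eucl_dist -sqrtr_sqr ler_sqrt; last by rewrite sumr_ge0 // => j _; rewrite sqr_ge0.
by rewrite (bigD1 i) //= lerDl sumr_ge0 // => j _; rewrite sqr_ge0.
Qed.

Lemma eucl_bound (x y : 'I_n -> R) : closed_simplex x -> closed_simplex y ->
  eucl_dist x y <= n%:R + 1.
Proof.
move=> hx hy.
have hS : \sum_(i < n) (x i - y i) ^+ 2 <= n%:R.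
  have -> : n%:R = \sum_(i < n) (1 : R) by rewrite sumr_const card_ord.
  apply: ler_sum => i _; have := cs_le1 i hx; have := cs_le1 i hy.
  have := hx.1 i; have := hy.1 i; move=> *; nra.
have hS0 : 0 <= \sum_(i < n) (x i - y i) ^+ 2 by rewrite sumr_ge0 // => j _; rewrite sqr_ge0.
rewrite /eucl_dist; apply: (@le_trans _ _ (\sum_(i < n) (x i - y i) ^+ 2 + 1)); last lra.
rewrite -[X in _ <= X]ger0_norm; last lra.
rewrite -sqrtr_sqr ler_sqrt; [nra | by rewrite sqr_ge0].
Qed.

Lemma coord_le_sup (eta xi : ('I_n -> R) -> ('I_n -> R)) p i :
  portfolio_map eta -> portfolio_map xi -> open_simplex p ->
  `|eta p i - xi p i| <= sup_dist eta xi.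
Proof.
move=> he hx hp; apply: (le_trans (coord_le_eucl _ _ i)).
apply: sup_upper_bound; last by exists p.
split; first by exists (eucl_dist (eta p) (xi p)); exists p.
exists (n%:R + 1) => y [q hq <-]; exact: eucl_bound (he q hq) (hx q hq).
Qed.

End Dist.

Lemma cantor_rel (Rel : (nat -> bool) -> nat -> Prop) :
  (forall s, exists k, Rel s k) ->
  (forall s s' k, Rel s k -> Rel s' k -> s = s') -> False.
Proof.
move=> hex huniq.
pose d := fun m => `[< exists s, Rel s m /\ s m = false >].
have [k hk] := hex d.
case hd: (d k).
  have := hd; rewrite /d => /asboolP [s [hs hsk]].
  have e := huniq _ _ _ hs hk; by rewrite e hd in hsk.
have : d k by rewrite /d; apply/asboolP; exists d.
by rewrite hd.
Qed.

Lemma sep (R : realType) (n : nat) (i0 : 'I_n) (hn : (1 < n)%N) s s' xi :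
  portfolio_map xi -> sup_dist (pis (R:=R) i0 s) xi < 1/6 ->
  sup_dist (pis (R:=R) i0 s') xi < 1/6 -> s = s'.
Proof.
move=> hxi hs hs'; apply: funext => m.
have hq := qm_open R i0 hn m.
have h1 := le_lt_trans (coord_le_sup i0 (pis_FG R i0 s).1 hxi hq) hs.
have h2 := le_lt_trans (coord_le_sup i0 (pis_FG R i0 s').1 hxi hq) hs'.
rewrite (pis_qm R i0 hn) ltr_norml in h1; rewrite (pis_qm R i0 hn) ltr_norml in h2.
move: h1 h2 => /andP[h1 h1'] /andP[h2 h2'].
by case: (s m) (s' m) h1 h1' h2 h2' => [] [] //= *; lra.
Qed.

Theorem lemma4p2 (R : realType) (n : nat) (hn : (2 <= n)%N) :
  ~ FG_totally_bounded R n /\ ~ FG_separable R n.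
Proof.
have hn' : (0 < n)%N by apply: ltnW.
pose i0 : 'I_n := Ordinal hn'.
have e6 : 0 < 1/6 :> R by rewrite divr_gt0.
split.
  move=> htb; have [k [c [hc hcov]]] := htb _ e6.
  apply: (@cantor_rel (fun s j => exists jj : 'I_k, val jj = j /\
                              sup_dist (pis (R:=R) i0 s) (c jj) < 1/6)).
    move=> s; have [jj hjj] := hcov _ (pis_FG R i0 s); by exists (val jj), jj.
  move=> s s' j [jj [<- h1]] [jj' [e h2]].
  have ej : jj' = jj by apply: val_inj.
  rewrite ej in h2; exact: (@sep R n i0 hn s s' (c jj) (hc jj).1 h1 h2).
move=> [f [hf hden]].
apply: (@cantor_rel (fun s k => sup_dist (pis (R:=R) i0 s) (f k) < 1/6)).
  move=> s; exact: hden _ (pis_FG R i0 s) _ e6.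
move=> s s' k h1 h2; exact: (@sep R n i0 hn s s' (f k) (hf k).1 h1 h2).
Qed.
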